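(* Let $m,n\ge 1$ and let $\lambda=n^m$ be the rectangular shape with $m$ rows, each of length $n$. Let $\rho=\{\rho_{i,j}\}_{1\le i\le m,\,1\le j\le n}$ be any density on $\lambda$, and define the rotated density $r(\rho)$ by $r(\rho)_{i,j}=\rho_{m+1-i,\,n+1-j}$. Then $|\mathrm{SVT}(\lambda,\rho)|=|\mathrm{SVT}(\lambda,r(\rho))|$.
   Context: A Young diagram of shape $\lambda=(\lambda_1\ge\lambda_2\ge\dots\ge\lambda_m)$ is a left-justified array of cells with $\lambda_i$ cells in row $i$; cell $(i,j)$ is in row $i$ (numbered from the top) and column $j$ (numbered from the left). A density on $\lambda$ is an assignment of a nonnegative integer $\rho_{i,j}$ to every cell $(i,j)$; let $N=\sum_{i,j}\rho_{i,j}$. A standard set-valued Young tableau of shape $\lambda$ and density $\rho$ is an assignment of a set $S_{i,j}$ with $|S_{i,j}|=\rho_{i,j}$ to each cell, such that the sets $S_{i,j}$ partition $[N]=\{1,\dots,N\}$, and such that every element of $S_{i,j}$ is smaller than every element of $S_{i,j+1}$ and every element of $S_{i+1,j}$ whenever those cells exist (conditions involving an empty set are vacuous). $\mathrm{SVT}(\lambda,\rho)$ denotes the set of all such tableaux. *)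

(* Defs.v *)
From mathcomp Require Import all_boot.
Set Implicit Arguments. Unset Strict Implicit. Unset Printing Implicit Defensive.

(* Rectangular shape n^m: cells (i,j) with i : 'I_m (row, 0-based), j : 'I_n
   (column, 0-based).  A density is a function rho : 'I_m -> 'I_n -> nat. *)
Definition density (m n : nat) := 'I_m -> 'I_n -> nat.

Definition dtotal m n (rho : density m n) : nat := \sum_(i < m) \sum_(j < n) rho i j.

(* A standard set-valued tableau is encoded by the map sending each element of
   [N] = {1..N} (represented as 'I_N = {0..N-1}, order preserved) to the cell
   whose set contains it; the set S_{i,j} is the preimage of (i,j).  This is the
   same data as a partition of [N] into sets indexed by the cells. *)
Definition cellset m n N (f : {ffun 'I_N -> 'I_m * 'I_n}) (c : 'I_m * 'I_n)
  : {set 'I_N} := [set k | f k == c].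

Arguments cellset {m n N} f c.

Definition next_cell m n (c d : 'I_m * 'I_n) : bool :=
  ((c.1 == d.1 :> nat) && (d.2 == c.2.+1 :> nat)) ||
  ((c.2 == d.2 :> nat) && (d.1 == c.1.+1 :> nat)).

Definition is_svt m n (rho : density m n) (f : {ffun 'I_(dtotal rho) -> 'I_m * 'I_n})
  : bool :=
  [forall c : 'I_m * 'I_n, #|cellset f c| == rho c.1 c.2] &&
  [forall c : 'I_m * 'I_n, forall d : 'I_m * 'I_n,
     next_cell c d ==>
     [forall k in cellset f c, forall l in cellset f d, (k < l)%N]].

Arguments is_svt {m n} rho f.

Definition SVT m n (rho : density m n) : {set {ffun 'I_(dtotal rho) -> 'I_m * 'I_n}} :=
  [set f | is_svt rho f].

Definition rot_density m n (rho : density m n) : density m n :=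
  fun i j => rho (rev_ord i) (rev_ord j).

(* Main.v *)
Require Import Defs.
From mathcomp Require Import all_boot.
From mathcomp Require Import zify.

Section Aux.
Variables (m n : nat).

Definition rc (c : 'I_m * 'I_n) : 'I_m * 'I_n := (rev_ord c.1, rev_ord c.2).

Lemma rcK : involutive rc.
Proof. by case=> a b; rewrite /rc /= !rev_ordK. Qed.

Lemma rc_inj : injective rc.
Proof. exact: inv_inj rcK. Qed.

Lemma dtotal_rot (rho rho' : density m n) :
  (forall i j, rho' i j = rho (rev_ord i) (rev_ord j)) -> dtotal rho = dtotal rho'.
Proof.
move=> H; rewrite /dtotal (reindex_inj rev_ord_inj) /=.
apply: eq_bigr => i _; rewrite (reindex_inj rev_ord_inj) /=.
by apply: eq_bigr => j _; rewrite H.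
Qed.

Lemma next_rc (c d : 'I_m * 'I_n) : next_cell c d -> next_cell (rc d) (rc c).
Proof.
case: c d => [a b] [a' b']; rewrite /next_cell /rc /=.
have := ltn_ord a; have := ltn_ord b; have := ltn_ord a'; have := ltn_ord b'.
move=> ? ? ? ?.
case/orP=> /andP[/eqP e1 /eqP e2]; apply/orP; [left|right]; apply/andP; split;
  apply/eqP; rewrite ?subnSK //; lia.
Qed.

Lemma svt_le (rho rho' : density m n) :
  (forall i j, rho' i j = rho (rev_ord i) (rev_ord j)) -> #|SVT rho| <= #|SVT rho'|.
Proof.
move=> H.
have eqN := dtotal_rot _ _ H.
set N := dtotal rho in eqN *.
set N' := dtotal rho' in eqN *.
pose h (k : 'I_N') : 'I_N := rev_ord (cast_ord (esym eqN) k).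
pose h' (x : 'I_N) : 'I_N' := cast_ord eqN (rev_ord x).
have hh' : cancel h' h by move=> x; rewrite /h /h' cast_ordK rev_ordK.
have h'h : cancel h h' by move=> x; rewrite /h /h' rev_ordK cast_ordKV.
pose phi (f : {ffun 'I_N -> 'I_m * 'I_n}) : {ffun 'I_N' -> 'I_m * 'I_n} :=
  [ffun k => rc (f (h k))].
have phi_inj : injective phi.
  move=> f g E; apply/ffunP => x.
  have := congr1 (fun F : {ffun _ -> _} => F (h' x)) E; rewrite /phi /= !ffunE hh'.
  exact: rc_inj.
rewrite -(card_imset (mem (SVT rho)) phi_inj); apply: subset_leq_card.
apply/subsetP => g /imsetP[f]; rewrite inE => /andP[/forallP Hc /forallP Ho] ->.
rewrite inE; apply/andP; split.
  apply/forallP => c; rewrite H.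
  have -> : cellset (phi f) c = [set k | f (h k) == rc c].
    apply/setP => k; rewrite !inE /phi ffunE.
    by apply/eqP/eqP => [<-|->]; rewrite ?rcK.
  have -> : [set k | f (h k) == rc c] = h' @: cellset f (rc c).
    apply/setP => k; apply/idP/imsetP.
      rewrite inE => E; exists (h k); last by rewrite h'h.
      by rewrite inE.
    by move=> [x] E ->; rewrite inE hh'; rewrite inE in E.
  rewrite (card_imset _ (can_inj hh')).
  by have := Hc (rc c); rewrite /rc /= => /eqP.
apply/forallP => c; apply/forallP => d; apply/implyP => ncd.
apply/forallP => k; apply/implyP; rewrite inE /phi ffunE => /eqP Ek.
apply/forallP => l; apply/implyP; rewrite inE ffunE => /eqP El.
have := Ho (rc d); move=> /forallP/(_ (rc c)); rewrite next_rc //=.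
move=> /forallP/(_ (h l)); rewrite inE -El rcK eqxx /=.
move=> /forallP/(_ (h k)); rewrite inE -Ek rcK eqxx /=.
rewrite /h /=.
have := ltn_ord k; have := ltn_ord l.
move=> Hk Hl; move: (nat_of_ord k) (nat_of_ord l) Hk Hl => a b; clear -eqN; rewrite -/N' -eqN; lia.
Qed.

End Aux.

Theorem proposition1 (m n : nat) (hm : 1 <= m) (hn : 1 <= n) (rho : density m n) :
  #|SVT rho| = #|SVT (rot_density rho)|.
Proof.
apply/eqP; rewrite eqn_leq; apply/andP; split.
  by apply: svt_le => i j.
by apply: svt_le => i j; rewrite /rot_density !rev_ordK.
Qed.
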